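(* Let $G$ be a flattened grammar with start symbol $S$, and let $\mathrm{CPS}(G)$ be its CPS transformation (with respect to an arbitrary fixed choice of CPS-triggering nonterminals), with start symbol $\hat S$. Then $G$ and $\mathrm{CPS}(G)$ generate the same language, i.e. for every $\lambda\in\Sigma^*$, $S\Rightarrow^*\lambda$ in $G$ if and only if $\hat S\Rightarrow^*\lambda$ in $\mathrm{CPS}(G)$.
   Context: BNF grammars and flattening. A BNF grammar over terminals $\Sigma$ is a list of rules $X\to e$, where $X$ is a nonterminal (called top-level) and $e$ is an expression: a single symbol; a concatenation $e_1\cdots e_n$ ($n\ge 0$, the case $n=0$ being $\varepsilon$); an alternation $e_1\mid\cdots\mid e_n$; an optional $e_1?$; or a repetition $e_1^*$. The procedure $\mathrm{Flatten}(X,e)$ emits context-free productions: (i) if $e=\alpha$ is a single symbol, emit $X\to\alpha$; (ii) if $e=e_1\cdots e_n$, for each $i$ let $\alpha_i=e_i$ if $e_i$ is a single symbol, and otherwise let $\alpha_i$ be a fresh nonterminal and call $\mathrm{Flatten}(\alpha_i,e_i)$; emit $X\to\alpha_1\cdots\alpha_n$; (iii) if $e=e_1\mid\cdots\mid e_n$, call $\mathrm{Flatten}(X,e_i)$ for each $i$; (iv) if $e=e_1?$, call $\mathrm{Flatten}(X,e_1\mid\varepsilon)$; (v) if $e=e_1^*$, let $\alpha$ be fresh, call $\mathrm{Flatten}(\alpha,e_1)$ and emit $X\to\alpha X$ and $X\to\varepsilon$. The flattened grammar $G$ consists of all productions emitted by $\mathrm{Flatten}(X,e)$ over all rules $X\to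 e$; its start symbol $S$ is a top-level nonterminal. CPS transformation. A nonterminal is CPS-eligible if it was created as a fresh symbol during flattening. Fix an arbitrary subset of the CPS-eligible nonterminals, called CPS-triggering (terminals and top-level nonterminals are never CPS-triggering). For every nonterminal $Y$ let $\hat Y$ be a new symbol; for a terminal $\sigma$ set $\hat\sigma=\sigma$. Define mutually recursive procedures. $\mathrm{CPSProd}(X\to\alpha_1\cdots\alpha_i\cdot\alpha_{i+1}\cdots\alpha_r,\ \tau)$, where $\tau$ is a string of symbols: if $i=0$, add the production $\hat X\to\tau$ to $\mathrm{CPS}(G)$; if $i>0$ and $\alpha_i$ is not CPS-triggering, call $\mathrm{CPSProd}(X\to\alpha_1\cdots\alpha_{i-1}\cdot\alpha_i\cdots\alpha_r,\ \hat\alpha_i\tau)$; if $i>0$, $\alpha_i$ is CPS-triggering, $i=r$ and $X=\alpha_r$ (i.e. the dotted production has the form $\alpha\to\gamma\alpha\,\cdot$), call $\mathrm{CPSProd}(X\to\alpha_1\cdots\alpha_{r-1}\cdot\alpha_r,\ \hat\alpha_r)$; otherwise ($\alpha_i$ CPS-triggering, not of that form) call $\mathrm{CPSSym}(\alpha_i,\tau)$ and then $\mathrm{CPSProd}(X\to\alpha_1\cdots\alpha_{i-1}\cdot\alpha_i\cdots\alpha_r,\ \hat\alpha_i)$. $\mathrm{CPSSym}(X,\tau)$: for each production $X\to\eta$ of $G$, call $\mathrm{CPSProd}(X\to\eta\,\cdot,\ \tau)$. The grammar $\mathrm{CPS}(G)$ consists of all productions added when $\mathrm{CPSSym}(X,\varepsilon)$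 is called for every non-CPS-triggering nonterminal $X$; its start symbol is $\hat S$. *)

(* Defs.v *)
From Stdlib Require Import List Relations.
Import ListNotations.
Set Implicit Arguments.

Inductive symbol (T NT : Type) : Type :=
| Tm (a : T)
| Nt (X : NT).
Arguments Tm {T NT} a.
Arguments Nt {T NT} X.

Definition cfg (T NT : Type) := NT -> list (symbol T NT) -> Prop.

Definition step (T NT : Type) (G : cfg T NT) (u v : list (symbol T NT)) : Prop :=
  exists l r X rhs, G X rhs /\ u = l ++ Nt X :: r /\ v = l ++ rhs ++ r.

Definition derives (T NT : Type) (G : cfg T NT) : relation (list (symbol T NT)) :=
  clos_refl_trans _ (step G).

Inductive expr (T N : Type) : Type :=
| ESym (s : symbol T N)
| ECat (es : list (expr T N))         (* e_1 ... e_n, n >= 0 (n = 0 is epsilon) *)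
| EAlt (es : list (expr T N))
| EOpt (e : expr T N)
| EStar (e : expr T N).
Arguments ESym {T N} s.
Arguments ECat {T N} es.
Arguments EAlt {T N} es.
Arguments EOpt {T N} e.
Arguments EStar {T N} e.

(** Nonterminals of the flattened grammar: top-level ones and fresh ones
    (fresh symbols are numbered by a global counter, hence pairwise distinct
    and distinct from every top-level nonterminal). *)
Inductive nt (N : Type) : Type :=
| Top (x : N)
| Fresh (k : nat).
Arguments Top {N} x.
Arguments Fresh {N} k.

Definition lift_sym (T N : Type) (s : symbol T N) : symbol T (nt N) :=
  match s with Tm a => Tm a | Nt x => Nt (Top x) end.

Definition prod (T N : Type) := (nt N * list (symbol T (nt N)))%type.

(** [flatten X e n] = (productions emitted by Flatten(X, e), next free counter),
    fresh nonterminals being [Fresh n], [Fresh (n+1)], ... *)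
Fixpoint flatten (T N : Type) (X : nt N) (e : expr T N) (n : nat) {struct e}
  : list (prod T N) * nat :=
  match e with
  | ESym s => ([(X, [lift_sym s])], n)
  | ECat es =>
      let fix go (es : list (expr T N)) (n : nat)
          : list (symbol T (nt N)) * list (prod T N) * nat :=
        match es with
        | [] => ([], [], n)
        | e1 :: es' =>
            let '(a, ps1, n1) :=
              match e1 with
              | ESym s => (lift_sym s, [], n)
              | _ => let '(ps, n1) := flatten (Fresh n) e1 (S n) in
                     (Nt (Fresh n), ps, n1)
              end in
            let '(as_, ps2, n2) := go es' n1 in
            (a :: as_, ps1 ++ ps2, n2)
        end in
      let '(alphas, ps, n') := go es n in
      (ps ++ [(X, alphas)], n')
  | EAlt es =>
      let fix go (es : list (expr T N)) (n : nat) : list (prod T N) * nat :=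
        match es with
        | [] => ([], n)
        | e1 :: es' =>
            let '(ps1, n1) := flatten X e1 n in
            let '(ps2, n2) := go es' n1 in
            (ps1 ++ ps2, n2)
        end in
      go es n
  | EOpt e1 =>
      (* Flatten(X, e1 | epsilon) = Flatten(X, e1); Flatten(X, epsilon) *)
      let '(ps, n1) := flatten X e1 n in
      (ps ++ [(X, [])], n1)
  | EStar e1 =>
      let a := Fresh n in
      let '(ps, n1) := flatten a e1 (S n) in
      (ps ++ [(X, [Nt a; Nt X]); (X, [])], n1)
  end.

Fixpoint flatten_rules (T N : Type) (rules : list (N * expr T N)) (n : nat)
  : list (prod T N) * nat :=
  match rules with
  | [] => ([], n)
  | (X, e) :: rs =>
      let '(ps1, n1) := flatten (Top X) e n in
      let '(ps2, n2) := flatten_rules rs n1 in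
      (ps1 ++ ps2, n2)
  end.

Definition flattened (T N : Type) (rules : list (N * expr T N)) : list (prod T N) :=
  fst (flatten_rules rules 0).

Definition flat_cfg (T N : Type) (rules : list (N * expr T N)) : cfg T (nt N) :=
  fun X rhs => In (X, rhs) (flattened rules).

(** CPS-eligible: created as a fresh symbol during flattening. *)
Definition cps_eligible (T N : Type) (rules : list (N * expr T N)) (Y : nt N) : Prop :=
  exists k, Y = Fresh k /\ k < snd (flatten_rules rules 0).

Inductive hat_nt (N : Type) : Type := Hat (Y : nt N).
Arguments Hat {N} Y.

Definition hat_sym (T N : Type) (s : symbol T (nt N)) : symbol T (hat_nt N) :=
  match s with Tm a => Tm a | Nt Y => Nt (Hat Y) end.

Section CPS.
Variables (T N : Type) (G : list (prod T N)) (trig : nt N -> Prop).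

Definition trig_sym (s : symbol T (nt N)) : Prop :=
  match s with Tm _ => False | Nt Y => trig Y end.

(** Calls made by the CPS procedures, started from CPSSym(X, eps) for every
    non-CPS-triggering nonterminal X.
    [ProdCall X pre post tau] : CPSProd(X -> pre . post, tau) is called.
    [SymCall X tau]          : CPSSym(X, tau) is called. *)
Inductive ProdCall : nt N -> list (symbol T (nt N)) -> list (symbol T (nt N)) ->
                     list (symbol T (hat_nt N)) -> Prop :=
| pc_sym : forall X eta tau, SymCall X tau -> In (X, eta) G -> ProdCall X eta [] tau
| pc_nontrig : forall X pre a post tau,
    ProdCall X (pre ++ [a]) post tau -> ~ trig_sym a ->
    ProdCall X pre (a :: post) (hat_sym a :: tau)
| pc_self : forall X pre tau,
    ProdCall X (pre ++ [Nt X]) [] tau -> trig X ->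
    ProdCall X pre [Nt X] [hat_sym (Nt X)]
| pc_trig : forall X pre a post tau,
    ProdCall X (pre ++ [a]) post tau -> trig_sym a ->
    ~ (post = [] /\ a = Nt X) ->
    ProdCall X pre (a :: post) [hat_sym a]
with SymCall : nt N -> list (symbol T (hat_nt N)) -> Prop :=
| sc_root : forall X, ~ trig X -> SymCall X []
| sc_call : forall X pre Y post tau,
    ProdCall X (pre ++ [Nt Y]) post tau -> trig Y ->
    ~ (post = [] /\ Y = X) ->
    SymCall Y tau.

(** CPS(G): the productions \hat X -> tau added by CPSProd(X -> . eta, tau). *)
Definition CPS : cfg T (hat_nt N) :=
  fun hX tau => exists X post, hX = Hat X /\ ProdCall X [] post tau.

End CPS.

(* Main.v *)
Require Import Defs.
From Stdlib Require Import List Relations Classical Lia.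
Import ListNotations.

Inductive gd {T NT : Type} (G : cfg T NT) : nat -> list (symbol T NT) -> list T -> Prop :=
| gd_nil n : gd G n [] []
| gd_tm n a u w : gd G n u w -> gd G n (Tm a :: u) (a :: w)
| gd_nt n X rhs u w1 w2 : G X rhs -> gd G n rhs w1 -> gd G (S n) u w2 ->
    gd G (S n) (Nt X :: u) (w1 ++ w2).

Lemma gd_mono {T NT} (G : cfg T NT) n u w : gd G n u w -> forall m, n <= m -> gd G m u w.
Proof.
  induction 1; intros m Hm.
  - constructor.
  - constructor; auto.
  - destruct m as [|m]; [lia|]. econstructor; eauto. apply IHgd1; lia.
Qed.

Lemma gd_app {T NT} (G : cfg T NT) n u1 w1 : gd G n u1 w1 -> forall u2 w2, gd G n u2 w2 ->
  gd G n (u1 ++ u2) (w1 ++ w2).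
Proof.
  induction 1; intros u2 w2' H2; simpl.
  - exact H2.
  - constructor; auto.
  - rewrite <- app_assoc. econstructor; eauto.
Qed.

Lemma gd_app_inv {T NT} (G : cfg T NT) n u1 : forall u2 w, gd G n (u1 ++ u2) w ->
  exists w1 w2, w = w1 ++ w2 /\ gd G n u1 w1 /\ gd G n u2 w2.
Proof.
  induction u1 as [|s u1 IH]; intros u2 w H; simpl in *.
  - exists [], w. repeat split; auto. constructor.
  - inversion H; subst;
    match goal with Hh : gd _ _ (u1 ++ u2) _ |- _ => destruct (IH _ _ Hh) as (wa & wb & -> & A & B) end.
    + exists (a :: wa), wb. repeat split; auto. constructor; auto.
    + exists (w1 ++ wa), wb. repeat split; auto.
      rewrite app_assoc; auto. econstructor; eauto.
Qed.

Lemma gd_nil_inv {T NT} (G : cfg T NT) n w : gd G n [] w -> w = [].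
Proof. intros H; inversion H; auto. Qed.

Lemma gd_single_inv {T NT} (G : cfg T NT) n X w : gd G n [Nt X] w ->
  exists m rhs, n = S m /\ G X rhs /\ gd G m rhs w.
Proof.
  intros H; inversion H; subst.
  match goal with Hh : gd _ _ [] _ |- _ => apply gd_nil_inv in Hh end. subst. rewrite app_nil_r.
  eauto.
Qed.

Lemma gd_map_tm {T NT} (G : cfg T NT) n w : gd G n (map Tm w) w.
Proof. induction w; simpl; constructor; auto. Qed.

Lemma step_ctx {T NT} (G : cfg T NT) l u v r : step G u v -> step G (l ++ u ++ r) (l ++ v ++ r).
Proof.
  intros (l0 & r0 & X & rhs & HG & -> & ->).
  exists (l ++ l0), (r0 ++ r), X, rhs. split; auto.
  split; repeat rewrite <- app_assoc; simpl; repeat rewrite <- app_assoc; auto.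
Qed.

Lemma derives_ctx {T NT} (G : cfg T NT) l u v r : derives G u v -> derives G (l ++ u ++ r) (l ++ v ++ r).
Proof.
  induction 1.
  - apply rt_step. apply step_ctx; auto.
  - apply rt_refl.
  - eapply rt_trans; eauto.
Qed.

Lemma derives_app {T NT} (G : cfg T NT) u u' v v' : derives G u u' -> derives G v v' ->
  derives G (u ++ v) (u' ++ v').
Proof.
  intros H1 H2. apply rt_trans with (u' ++ v).
  - pose proof (derives_ctx G [] u u' v H1). simpl in H. auto.
  - pose proof (derives_ctx G u' v v' [] H2). rewrite !app_nil_r in H. auto.
Qed.

Lemma gd_derives {T NT} (G : cfg T NT) n u w : gd G n u w -> derives G u (map Tm w).
Proof.
  induction 1; simpl.
  - apply rt_refl.
  - apply (derives_app G [Tm a] [Tm a]); auto. apply rt_refl.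
  - rewrite map_app. apply rt_trans with (rhs ++ u).
    + apply rt_step. exists [], u, X, rhs. auto.
    + apply derives_app; auto.
Qed.

Lemma derives_gd {T NT} (G : cfg T NT) u w : derives G u (map Tm w) -> exists n, gd G n u w.
Proof.
  intros H. apply clos_rt_rt1n in H. remember (map Tm w) as v. revert Heqv.
  induction H; intros ->.
  - exists 0. apply gd_map_tm.
  - destruct (IHclos_refl_trans_1n eq_refl) as [n Hn].
    destruct H as (l & r & X & rhs & HG & -> & ->).
    destruct (gd_app_inv G n l _ _ Hn) as (wl & w' & -> & A & B).
    destruct (gd_app_inv G n rhs _ _ B) as (wm & wr & -> & C & D).
    exists (S n). apply gd_app. eapply gd_mono; eauto.
    econstructor; eauto. eapply gd_mono; eauto.
Qed.

Definition gs {T NT} (G : cfg T NT) u w := exists n, gd G n u w.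

Lemma gs_app {T NT} (G : cfg T NT) u1 w1 u2 w2 : gs G u1 w1 -> gs G u2 w2 -> gs G (u1 ++ u2) (w1 ++ w2).
Proof.
  intros [n1 H1] [n2 H2]. exists (max n1 n2). apply gd_app; eapply gd_mono; eauto; lia.
Qed.

Lemma gs_nt {T NT} (G : cfg T NT) X rhs w : G X rhs -> gs G rhs w -> gs G [Nt X] w.
Proof.
  intros HG [n Hn]. exists (S n). rewrite <- (app_nil_r w). econstructor; eauto. constructor.
Qed.

Lemma gs_nil {T NT} (G : cfg T NT) : gs G [] [].
Proof. exists 0; constructor. Qed.

Lemma gs_tm {T NT} (G : cfg T NT) a u w : gs G u w -> gs G (Tm a :: u) (a :: w).
Proof. intros [n H]; exists n; constructor; auto. Qed.



Lemma pc_in {T N} (Gl : list (prod T N)) trig X p q tau :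
  ProdCall Gl trig X p q tau -> In (X, p ++ q) Gl.
Proof.
  induction 1.
  - rewrite app_nil_r; auto.
  - rewrite <- app_assoc in IHProdCall; auto.
  - rewrite <- app_assoc in IHProdCall; auto.
  - rewrite <- app_assoc in IHProdCall; auto.
Qed.

Lemma pc_nil_sym {T N} (Gl : list (prod T N)) trig X p tau :
  ProdCall Gl trig X p [] tau -> SymCall Gl trig X tau.
Proof. intros H; inversion H; auto. Qed.

Lemma pc_left {T N} (Gl : list (prod T N)) trig X p a q tau :
  ProdCall Gl trig X (p ++ [a]) q tau -> exists tau', ProdCall Gl trig X p (a :: q) tau'.
Proof.
  intros H. destruct (classic (trig_sym trig a)) as [Ht|Ht].
  - destruct (classic (q = [] /\ a = Nt X)) as [[-> ->]|Hs].
    + eexists; eapply pc_self; eauto.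
    + eexists; eapply pc_trig; eauto.
  - eexists; eapply pc_nontrig; eauto.
Qed.

Lemma pc_right {T N} (Gl : list (prod T N)) trig X p a q tau :
  ProdCall Gl trig X p (a :: q) tau -> exists tau', ProdCall Gl trig X (p ++ [a]) q tau' /\
   ((~ trig_sym trig a /\ tau = hat_sym a :: tau') \/
    (q = [] /\ a = Nt X /\ trig X /\ tau = [hat_sym (Nt X)]) \/
    (trig_sym trig a /\ ~ (q = [] /\ a = Nt X) /\ tau = [hat_sym a])).
Proof.
  intros H; inversion H; subst; eauto 10.
Qed.

Lemma pc_start {T N} (Gl : list (prod T N)) trig X : forall p q tau,
  ProdCall Gl trig X p q tau -> exists sigma, ProdCall Gl trig X [] (p ++ q) sigma.
Proof.
  intros p. induction p as [|a p IH] using rev_ind; intros q tau H.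
  - eauto.
  - destruct (pc_left _ _ _ _ _ _ _ H) as [t' Ht'].
    rewrite <- app_assoc. simpl. eapply IH; eauto.
Qed.

Scheme pc_mut := Induction for ProdCall Sort Prop
with sc_mut := Induction for SymCall Sort Prop.

Definition pos_uniq {T N} (Gl : list (prod T N)) (trig : nt N -> Prop) :=
  forall Y X1 p1 q1 X2 p2 q2, trig Y -> In (X1, p1 ++ Nt Y :: q1) Gl -> In (X2, p2 ++ Nt Y :: q2) Gl ->
    ~ (q1 = [] /\ Y = X1) -> ~ (q2 = [] /\ Y = X2) -> X1 = X2 /\ p1 = p2 /\ q1 = q2.

Lemma call_uniq {T N} (Gl : list (prod T N)) trig (HU : pos_uniq Gl trig) Y t1 t2 :
  SymCall Gl trig Y t1 -> SymCall Gl trig Y t2 -> t1 = t2.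
Proof.
  intros H. revert t2.
  apply (sc_mut T N Gl trig
    (fun X p q t1 _ => forall t2, ProdCall Gl trig X p q t2 -> t1 = t2)
    (fun Y t1 _ => forall t2, SymCall Gl trig Y t2 -> t1 = t2)) with (n := Y) (l := t1); [| | | | | | exact H]; clear H.
  - intros X eta tau Hs IH Hin t2 H2. inversion H2; subst; auto.
  - intros X pre a post tau Hp IH Hn t2 H2. inversion H2; subst.
    + f_equal; auto.
    + exfalso; apply Hn; simpl; auto.
    + contradiction.
  - intros X pre tau Hp IH Ht t2 H2. inversion H2; subst.
    + exfalso; match goal with Hh : ~ trig_sym _ _ |- _ => apply Hh; simpl; auto end.
    + auto.
    + exfalso; match goal with Hh : ~ (_ = [] /\ _) |- _ => apply Hh; auto end.
  - intros X pre a post tau Hp IH Ht Hs t2 H2. inversion H2; subst.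
    + contradiction.
    + exfalso; apply Hs; auto.
    + auto.
  - intros X Ht t2 H2. inversion H2; subst; auto. contradiction.
  - intros X pre Y0 post tau Hp IH Ht Hs t2 H2. inversion H2; subst.
    + contradiction.
    + pose proof (pc_in _ _ _ _ _ _ Hp) as Hp'.
      match goal with Hq : ProdCall _ _ _ _ _ t2 |- _ => pose proof (pc_in _ _ _ _ _ _ Hq) as Hq' end.
      rewrite <- app_assoc in Hp', Hq'. simpl in Hp', Hq'.
      match goal with Hh : ~ (_ = [] /\ Y0 = _) , Hh2 : ~ (_ = [] /\ Y0 = _) |- _ =>
        destruct (HU _ _ _ _ _ _ _ Ht Hp' Hq' Hs Hh2) as (-> & -> & ->) end. apply IH; auto.
Qed.

Lemma complete {T N} (Gl : list (prod T N)) trig (HU : pos_uniq Gl trig) n u w :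
  gd (fun X rhs => In (X, rhs) Gl) n u w ->
  forall X p tau, ProdCall Gl trig X p u tau -> forall te we, SymCall Gl trig X te ->
   gs (CPS Gl trig) te we -> gs (CPS Gl trig) tau (w ++ we).
Proof.
  induction 1; intros Xc p tau Hpc te we Hsc Hte.
  - simpl. apply pc_nil_sym in Hpc. rewrite (call_uniq Gl trig HU _ _ _ Hpc Hsc). auto.
  - destruct (pc_right _ _ _ _ _ _ _ Hpc) as (t' & Hp' & [[_ ->]|[(_ & Hc & _)|(Ht & _)]]).
    + simpl. apply gs_tm. eapply IHgd; eauto.
    + discriminate.
    + contradiction.
  -
    assert (HP : forall te0 we0, SymCall Gl trig X te0 -> gs (CPS Gl trig) te0 we0 ->
              gs (CPS Gl trig) [Nt (Hat X)] (w1 ++ we0)).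
    { intros te0 we0 Hs0 Ht0. destruct (pc_start Gl trig X rhs [] te0 (@pc_sym _ _ Gl trig X rhs te0 Hs0 H)) as [sg Hsg].
      rewrite app_nil_r in Hsg. apply gs_nt with sg. exists X, rhs; auto. eapply IHgd1; eauto. }
    destruct (pc_right _ _ _ _ _ _ _ Hpc) as (t' & Hp' & [[Hnt ->]|[(-> & Hc & Htx & ->)|(Ht & Hs & ->)]]).
    + simpl. rewrite <- app_assoc. change (Nt (Hat X) :: t') with ([Nt (Hat X)] ++ t').
      rewrite <- (app_nil_r w1) at 1. apply gs_app.
      * apply HP with []. apply sc_root. exact Hnt. apply gs_nil.
      * eapply IHgd2; eauto.
    + injection Hc as ->. simpl. rewrite <- app_assoc. apply HP with t'.
      apply pc_nil_sym in Hp'; auto. eapply IHgd2; eauto.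
    + simpl. rewrite <- app_assoc. apply HP with t'.
      * eapply sc_call; eauto. intros [E1 E2]; apply Hs; split; congruence.
      * eapply IHgd2; eauto.
Qed.

Lemma sound {T N} (Gl : list (prod T N)) trig (HU : pos_uniq Gl trig) m :
  (forall u v, gd (CPS Gl trig) m u v ->
    forall X p q, ProdCall Gl trig X p q u -> forall te, SymCall Gl trig X te ->
    exists wq we, v = wq ++ we /\ gs (fun X rhs => In (X, rhs) Gl) q wq /\ gd (CPS Gl trig) m te we) /\
  (forall Y v, gd (CPS Gl trig) m [Nt (Hat Y)] v -> forall te, SymCall Gl trig Y te ->
    exists w we, v = w ++ we /\ gs (fun X rhs => In (X, rhs) Gl) [Nt Y] w /\
      exists m', m' < m /\ gd (CPS Gl trig) m' te we).
Proof.
  induction m as [m IHm] using (well_founded_induction Wf_nat.lt_wf).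
  assert (SymS : forall Y v, gd (CPS Gl trig) m [Nt (Hat Y)] v -> forall te, SymCall Gl trig Y te ->
    exists w we, v = w ++ we /\ gs (fun X rhs => In (X, rhs) Gl) [Nt Y] w /\
      exists m', m' < m /\ gd (CPS Gl trig) m' te we).
  { intros Y v Hv te Hte. destruct (gd_single_inv _ _ _ _ Hv) as (m0 & sg & -> & (X & post & HX & Hpc) & Hsg).
    injection HX as <-.
    destruct (proj1 (IHm m0 ltac:(lia)) _ _ Hsg _ _ _ Hpc _ Hte) as (wq & we & -> & Hwq & Hwe).
    exists wq, we. split; auto. split.
    - apply gs_nt with post; auto. apply pc_in in Hpc; auto.
    - exists m0; split; auto. }
  split; [|exact SymS].
  intros u. induction u as [|s u IHu]; intros v Hv X p q Hpc te Hte.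
  - destruct q as [|a q].
    + apply pc_nil_sym in Hpc. rewrite (call_uniq Gl trig HU _ _ _ Hte Hpc).
      exists [], v. repeat split; auto. apply gs_nil.
    + destruct (pc_right _ _ _ _ _ _ _ Hpc) as (t' & Hp' & [[_ H]|[(_ & _ & _ & H)|(_ & _ & H)]]); discriminate.
  - destruct q as [|a q].
    + apply pc_nil_sym in Hpc. rewrite (call_uniq Gl trig HU _ _ _ Hte Hpc).
      exists [], v. repeat split; auto. apply gs_nil.
    + destruct (pc_right _ _ _ _ _ _ _ Hpc) as (t' & Hp' & [[Hnt Heq]|[(-> & -> & Htx & Heq)|(Ht & Hs & Heq)]]).
      * injection Heq as -> Eu. subst u. destruct a as [b|Z]; simpl in *.
        -- inversion Hv; subst.
           match goal with H3 : gd _ _ t' _ |- _ => rename H3 into Htl end.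
           destruct (IHu _ Htl _ _ _ Hp' _ Hte) as (wq & we & -> & A & B).
           exists (b :: wq), we. repeat split; auto. destruct A as [k Hk]. exists k. constructor; auto.
        -- inversion Hv; subst.
           match goal with H3 : gd _ (S n) t' _ |- _ => rename H3 into Htl end.
           assert (Hh : gd (CPS Gl trig) (S n) [Nt (Hat Z)] (w1 ++ [])).
           { econstructor; eauto. constructor. }
           destruct (SymS _ _ Hh [] (sc_root _ _ _ Hnt)) as (wz & wz' & E & Hz & (m' & _ & Hm')).
           apply gd_nil_inv in Hm'. subst wz'. rewrite !app_nil_r in E. subst wz.
           destruct (IHu _ Htl _ _ _ Hp' _ Hte) as (wq & we & -> & A & B).
           exists (w1 ++ wq), we. rewrite app_assoc. repeat split; auto.
           change (Nt Z :: q) with ([Nt Z] ++ q). apply gs_app; auto.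
      * injection Heq as -> ->. destruct (SymS _ _ Hv _ Hte) as (w & we & -> & Hw & (m' & Hlt & Hm')).
        exists w, we. repeat split; auto. eapply gd_mono; eauto. lia.
      * destruct a as [b|Z]; [contradiction|]. injection Heq as -> ->. simpl in Ht.
        assert (Hsz : SymCall Gl trig Z t').
        { eapply sc_call; eauto. intros [E1 E2]; apply Hs; split; congruence. }
        destruct (SymS _ _ Hv _ Hsz) as (wz & w'' & -> & Hz & (m' & Hlt & Hm')).
        destruct (proj1 (IHm m' Hlt) _ _ Hm' _ _ _ Hp' _ Hte) as (wq & we & -> & A & B).
        exists (wz ++ wq), we. rewrite app_assoc. repeat split; auto.
        change (Nt Z :: q) with ([Nt Z] ++ q). apply gs_app; auto.
        eapply gd_mono; eauto. lia.
Qed.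

Definition cat1 {T N} (e1 : expr T N) (n : nat) : symbol T (nt N) * list (prod T N) * nat :=
  match e1 with
  | ESym s => (lift_sym s, [], n)
  | _ => let '(ps, n1) := flatten (Fresh n) e1 (S n) in (Nt (Fresh n), ps, n1)
  end.

Definition catgo {T N} := fix catgo (es : list (expr T N)) (n : nat) : list (symbol T (nt N)) * list (prod T N) * nat :=
  match es with
  | [] => ([], [], n)
  | e1 :: es' =>
      let '(a, ps1, n1) := cat1 e1 n in
      let '(as_, ps2, n2) := catgo es' n1 in
      (a :: as_, ps1 ++ ps2, n2)
  end.
Lemma catgo_cons {T N} (e1 : expr T N) es n : catgo (e1 :: es) n =
  (let '(a, ps1, n1) := cat1 e1 n in let '(as_, ps2, n2) := catgo es n1 in (a :: as_, ps1 ++ ps2, n2)).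
Proof. reflexivity. Qed.

Definition altgo {T N} (X : nt N) := fix altgo (es : list (expr T N)) (n : nat) : list (prod T N) * nat :=
  match es with
  | [] => ([], n)
  | e1 :: es' =>
      let '(ps1, n1) := flatten X e1 n in
      let '(ps2, n2) := altgo es' n1 in
      (ps1 ++ ps2, n2)
  end.
Lemma altgo_cons {T N} (X : nt N) (e1 : expr T N) es n : altgo X (e1 :: es) n =
  (let '(ps1, n1) := flatten X e1 n in let '(ps2, n2) := altgo X es n1 in (ps1 ++ ps2, n2)).
Proof. reflexivity. Qed.

Lemma flatten_cat {T N} (X : nt N) (es : list (expr T N)) n :
  flatten X (ECat es) n = (let '(alphas, ps, n') := catgo es n in (ps ++ [(X, alphas)], n')).
Proof. reflexivity. Qed.

Lemma flatten_alt {T N} (X : nt N) (es : list (expr T N)) n :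
  flatten X (EAlt es) n = altgo X es n.
Proof. reflexivity. Qed.

Definition occ {T N} (ps : list (prod T N)) k X p q :=
  In (X, p ++ Nt (Fresh k) :: q) ps /\ ~ (q = [] /\ @Fresh N k = X).

Definition Inv {T N} (ps : list (prod T N)) (R : nat -> Prop) :=
  (forall k X p q, occ ps k X p q -> R k) /\
  (forall k X1 p1 q1 X2 p2 q2, occ ps k X1 p1 q1 -> occ ps k X2 p2 q2 -> X1 = X2 /\ p1 = p2 /\ q1 = q2).

Lemma occ_app {T N} (ps1 ps2 : list (prod T N)) k X p q :
  occ (ps1 ++ ps2) k X p q -> occ ps1 k X p q \/ occ ps2 k X p q.
Proof. intros [H1 H2]. apply in_app_or in H1. destruct H1; [left|right]; split; auto. Qed.

Lemma Inv_app {T N} (ps1 ps2 : list (prod T N)) R1 R2 :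
  Inv ps1 R1 -> Inv ps2 R2 -> (forall k, R1 k -> R2 k -> False) ->
  Inv (ps1 ++ ps2) (fun k => R1 k \/ R2 k).
Proof.
  intros [A1 B1] [A2 B2] D. split.
  - intros k X p q H. destruct (occ_app _ _ _ _ _ _ H); eauto.
  - intros k X1 p1 q1 X2 p2 q2 H1 H2.
    destruct (occ_app _ _ _ _ _ _ H1) as [O1|O1]; destruct (occ_app _ _ _ _ _ _ H2) as [O2|O2]; eauto;
    exfalso; eapply D; eauto.
Qed.

Lemma Inv_weak {T N} (ps : list (prod T N)) (R R' : nat -> Prop) :
  Inv ps R -> (forall k, R k -> R' k) -> Inv ps R'.
Proof. intros [A B] H; split; eauto. Qed.

Lemma Inv_noocc {T N} (ps : list (prod T N)) R :
  (forall k X p q, ~ occ ps k X p q) -> Inv ps R.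
Proof. intros H; split; intros; exfalso; eapply H; eauto. Qed.

Lemma Inv_nil {T N} R : Inv (@nil (prod T N)) R.
Proof. apply Inv_noocc. intros k X p q [H _]; destruct H. Qed.

Lemma split2 {A} (a b c : A) p q : p ++ c :: q = [a; b] ->
  (p = [] /\ c = a /\ q = [b]) \/ (p = [a] /\ c = b /\ q = []).
Proof.
  destruct p as [|x [|y p]]; simpl; intros H; inversion H; subst; auto.
  destruct p; discriminate.
Qed.

Lemma split1 {A} (a c : A) p q : p ++ c :: q = [a] -> p = [] /\ c = a /\ q = [].
Proof. destruct p as [|x [|y p]]; simpl; intros H; inversion H; subst; auto. Qed.

Lemma split0 {A} (c : A) p q : p ++ c :: q = [] -> False.
Proof. destruct p; discriminate. Qed.

Lemma Inv_sym {T N} (X : nt N) (s : symbol T N) R : Inv [(X, [lift_sym s])] R.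
Proof.
  apply Inv_noocc. intros k Y p q [H _]. destruct H as [H|[]]. injection H as _ H.
  symmetry in H. apply split1 in H. destruct H as (_ & H & _). destruct s; discriminate.
Qed.

Lemma Inv_eps {T N} (X : nt N) R : Inv [(X, @nil (symbol T (nt N)))] R.
Proof.
  apply Inv_noocc. intros k Y p q [H _]. destruct H as [H|[]]. injection H as _ H.
  symmetry in H. eapply split0; eauto.
Qed.

Lemma Inv_star {T N} (X : nt N) n : Inv [(X, [@Nt T _ (Fresh n); Nt X])] (fun k => k = n).
Proof.
  assert (C : forall k Y p q, occ [(X, [@Nt T _ (Fresh n); Nt X])] k Y p q -> k = n /\ Y = X /\ p = [] /\ q = [Nt X]).
  { intros k Y p q [H Hs]. destruct H as [H|[]]. injection H as <- H.
    symmetry in H. apply split2 in H. destruct H as [(-> & Hc & ->)|(-> & Hc & ->)].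
    - injection Hc as ->; auto.
    - injection Hc as Hc. exfalso; apply Hs; auto. }
  split.
  - intros k Y p q H. apply C in H; tauto.
  - intros k X1 p1 q1 X2 p2 q2 H1 H2. apply C in H1. apply C in H2.
    destruct H1 as (_ & -> & -> & ->). destruct H2 as (_ & -> & -> & ->). auto.
Qed.

Definition expr_ind' {T N} (P : expr T N -> Prop)
  (Hs : forall s, P (ESym s)) (Hc : forall es, Forall P es -> P (ECat es))
  (Ha : forall es, Forall P es -> P (EAlt es)) (Ho : forall e, P e -> P (EOpt e))
  (Hst : forall e, P e -> P (EStar e)) : forall e, P e :=
  fix F (e : expr T N) : P e :=
  match e with
  | ESym s => Hs s
  | ECat es => Hc es ((fix go (l : list (expr T N)) : Forall P l :=
                 match l with [] => Forall_nil _ | x :: l' => Forall_cons _ (F x) (go l') end) es)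
  | EAlt es => Ha es ((fix go (l : list (expr T N)) : Forall P l :=
                 match l with [] => Forall_nil _ | x :: l' => Forall_cons _ (F x) (go l') end) es)
  | EOpt e1 => Ho e1 (F e1)
  | EStar e1 => Hst e1 (F e1)
  end.

Definition FlatP {T N} (e : expr T N) := forall X n ps n', flatten X e n = (ps, n') ->
  n <= n' /\ Inv ps (fun k => n <= k < n').

Lemma cat1_inv {T N} (e1 : expr T N) n a ps1 n1 : FlatP e1 -> cat1 e1 n = (a, ps1, n1) ->
  (ps1 = [] /\ n1 = n /\ forall k, a <> Nt (Fresh k)) \/
  (a = Nt (Fresh n) /\ S n <= n1 /\ Inv ps1 (fun k => S n <= k < n1)).
Proof.
  intros HF H. destruct e1; unfold cat1 in H; cbv beta iota in H;
  try (destruct (flatten (Fresh n) _ (S n)) as [ps n2] eqn:E; injection H as <- <- <-;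
       right; destruct (HF _ _ _ _ E); auto).
  injection H as <- <- <-. left. repeat split; auto. intros k; destruct s; discriminate.
Qed.

Definition AlphOK {T N} (alphas : list (symbol T (nt N))) (ps : list (prod T N)) n n' :=
  forall p k q, alphas = p ++ Nt (Fresh k) :: q ->
    n <= k < n' /\ (forall X p' q', ~ occ ps k X p' q') /\
    (forall p2 q2, alphas = p2 ++ Nt (Fresh k) :: q2 -> p = p2 /\ q = q2).

Lemma catgo_inv {T N} (es : list (expr T N)) : Forall FlatP es -> forall n alphas ps n',
  catgo es n = (alphas, ps, n') ->
  n <= n' /\ Inv ps (fun k => n <= k < n') /\ AlphOK alphas ps n n'.
Proof.
  induction 1 as [|e1 es HF1 HFs IH]; intros n alphas ps n' H.
  - simpl in H. injection H as <- <- <-. split; auto. split. apply Inv_nil.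
    intros p k q E. exfalso; eapply split0; eauto.
  - rewrite catgo_cons in H.
    destruct (cat1 e1 n) as [[a ps1] n1] eqn:E1.
    destruct (catgo es n1) as [[as_ ps2] n2] eqn:E2.
    injection H as <- <- <-.
    destruct (IH _ _ _ _ E2) as (L2 & I2 & A2).
    destruct (cat1_inv e1 n a ps1 n1 HF1 E1) as [(-> & -> & Ha)|(-> & L1 & I1)].
    + split; auto. split.
      * simpl. auto.
      * intros p k q E. destruct p as [|x p]; simpl in E; injection E as Ex E.
        -- exfalso; eapply Ha; eauto.
        -- subst x. destruct (A2 _ _ _ E) as (R & NO & U). split; [lia|]. split.
           ++ simpl. auto.
           ++ intros p2 q2 E'. destruct p2 as [|y p2]; simpl in E'; injection E' as Ey E'.
              ** exfalso; eapply Ha; eauto.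
              ** destruct (U _ _ E') as [-> ->]. subst; auto.
    + split; [lia|]. split.
      * eapply Inv_weak. apply Inv_app; eauto. simpl; intros; lia. simpl; intros; lia.
      * destruct I1 as [R1 _]. destruct I2 as [R2 _].
        intros p k q E. destruct p as [|x p]; simpl in E; injection E as Ex E.
        -- subst. split; [lia|]. split.
           ++ intros X p' q' O. destruct (occ_app _ _ _ _ _ _ O) as [O'|O'].
              apply R1 in O'; lia. apply R2 in O'; lia.
           ++ intros p2 q2 E'. destruct p2 as [|y p2]; simpl in E'; inversion E'; subst.
              ** auto.
              ** destruct (A2 p2 _ q2 eq_refl) as (R' & _). lia.
        -- subst x. destruct (A2 _ _ _ E) as (R & NO & U). split; [lia|]. split.
           ++ intros X p' q' O. destruct (occ_app _ _ _ _ _ _ O) as [O'|O'].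
              apply R1 in O'; lia. eapply NO; eauto.
           ++ intros p2 q2 E'. destruct p2 as [|y p2]; simpl in E'; inversion E'; subst.
              ** lia.
              ** destruct (U _ _ H1) as [-> ->]. auto.
Qed.

Lemma altgo_inv {T N} (X : nt N) (es : list (expr T N)) : Forall FlatP es -> forall n ps n',
  altgo X es n = (ps, n') -> n <= n' /\ Inv ps (fun k => n <= k < n').
Proof.
  induction 1 as [|e1 es HF1 HFs IH]; intros n ps n' H.
  - simpl in H. injection H as <- <-. split; auto. apply Inv_nil.
  - rewrite altgo_cons in H.
    destruct (flatten X e1 n) as [ps1 n1] eqn:E1.
    destruct (altgo X es n1) as [ps2 n2] eqn:E2.
    injection H as <- <-.
    destruct (HF1 _ _ _ _ E1) as [L1 I1]. destruct (IH _ _ _ E2) as [L2 I2].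
    split; [lia|]. eapply Inv_weak. apply Inv_app; eauto. simpl; intros; lia. simpl; intros; lia.
Qed.

Lemma flat_inv {T N} (e : expr T N) : FlatP e.
Proof.
  induction e as [s|es Hes|es Hes|e IH|e IH] using expr_ind'; intros X n ps n' H.
  - simpl in H. injection H as <- <-. split; auto. apply Inv_sym.
  - rewrite flatten_cat in H. destruct (catgo es n) as [[alphas ps0] n0] eqn:E.
    injection H as <- <-. destruct (catgo_inv es Hes _ _ _ _ E) as (L & [R U] & A).
    split; auto. split.
    + intros k Y p q O. destruct (occ_app _ _ _ _ _ _ O) as [O'|[O' Hs]]; eauto.
      destruct O' as [O'|[]]. injection O' as <- O'. destruct (A _ _ _ O'); tauto.
    + intros k X1 p1 q1 X2 p2 q2 O1 O2.
      destruct (occ_app _ _ _ _ _ _ O1) as [O1'|[O1' _]]; destruct (occ_app _ _ _ _ _ _ O2) as [O2'|[O2' _]]; eauto.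
      * destruct O2' as [O2'|[]]. injection O2' as <- O2'.
        destruct (A _ _ _ O2') as (_ & NO & _). exfalso; eapply NO; eauto.
      * destruct O1' as [O1'|[]]. injection O1' as <- O1'.
        destruct (A _ _ _ O1') as (_ & NO & _). exfalso; eapply NO; eauto.
      * destruct O1' as [O1'|[]]. injection O1' as <- O1'.
        destruct O2' as [O2'|[]]. injection O2' as <- O2'.
        destruct (A _ _ _ O1') as (_ & _ & U'). destruct (U' _ _ O2') as [-> ->]. auto.
  - rewrite flatten_alt in H. eapply altgo_inv; eauto.
  - simpl in H. destruct (flatten X e n) as [ps1 n1] eqn:E. injection H as <- <-.
    destruct (IH _ _ _ _ E) as [L I]. split; auto. eapply Inv_weak. apply Inv_app. exact I. apply (Inv_eps X (fun _ => False)).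
    simpl; intros; auto. simpl; intros k [Hk|[]]; auto.
  - simpl in H. destruct (flatten (Fresh n) e (S n)) as [ps1 n1] eqn:E. injection H as <- <-.
    destruct (IH _ _ _ _ E) as [L I]. split; [lia|].
    eapply Inv_weak. apply Inv_app. exact I.
    change ([(X, [Nt (Fresh n); Nt X]); (X, [])]) with ([(X, [@Nt T _ (Fresh n); Nt X])] ++ [(X, [])]).
    apply Inv_app. apply Inv_star. apply (Inv_eps X (fun _ => False)). simpl; intros; auto.
    simpl; intros k H1 [H2|[]]; lia.
    simpl; intros k [H1|[H1|[]]]; lia.
Qed.

Lemma rules_inv {T N} (rules : list (N * expr T N)) : forall n ps n',
  flatten_rules rules n = (ps, n') -> n <= n' /\ Inv ps (fun k => n <= k < n').
Proof.
  induction rules as [|[X e] rs IH]; intros n ps n' H; simpl in H.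
  - injection H as <- <-. split; auto. apply Inv_nil.
  - destruct (flatten (Top X) e n) as [ps1 n1] eqn:E1.
    destruct (flatten_rules rs n1) as [ps2 n2] eqn:E2.
    injection H as <- <-.
    destruct (flat_inv e _ _ _ _ E1) as [L1 I1]. destruct (IH _ _ _ E2) as [L2 I2].
    split; [lia|]. eapply Inv_weak. apply Inv_app; eauto. simpl; intros; lia. simpl; intros; lia.
Qed.

Lemma flat_pos_uniq {T N} (rules : list (N * expr T N)) (trig : nt N -> Prop) :
  (forall Y, trig Y -> cps_eligible rules Y) -> pos_uniq (flattened rules) trig.
Proof.
  intros Htr Y X1 p1 q1 X2 p2 q2 HY H1 H2 S1 S2.
  destruct (Htr _ HY) as (k & -> & _).
  unfold flattened in *. destruct (flatten_rules rules 0) as [ps n'] eqn:E. simpl in *.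
  destruct (rules_inv rules _ _ _ E) as [_ [_ U]].
  eapply U; split; eauto.
Qed.

Theorem mainTheorem3 (T N : Type) (rules : list (N * expr T N)) (S : N)
  (trig : nt N -> Prop) :
  In S (map fst rules) ->
  (forall Y, trig Y -> cps_eligible rules Y) ->
  forall w : list T,
    derives (flat_cfg rules) [Nt (Top S)] (map Tm w) <->
    derives (CPS (flattened rules) trig) [Nt (Hat (Top S))] (map Tm w).
Proof.
  intros _ Htr w.
  pose proof (flat_pos_uniq rules trig Htr) as HU.
  assert (NT : ~ trig (Top S)).
  { intros H. destruct (Htr _ H) as (k & E & _). discriminate. }
  split; intros H.
  - destruct (derives_gd _ _ _ H) as [n Hn].
    destruct (gd_single_inv _ _ _ _ Hn) as (m & rhs & -> & Hin & Hrhs).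
    destruct (pc_start _ trig (Top S) rhs [] [] (@pc_sym _ _ (flattened rules) trig (Top S) rhs [] (sc_root _ _ _ NT) Hin)) as [sg Hsg].
    rewrite app_nil_r in Hsg.
    pose proof (complete _ trig HU _ _ _ Hrhs (Top S) [] sg Hsg [] [] (sc_root _ _ _ NT) (gs_nil _)) as Hc.
    rewrite app_nil_r in Hc.
    destruct (gs_nt (CPS (flattened rules) trig) (Hat (Top S)) sg w) as [k Hk].
    + exists (Top S), rhs. auto.
    + exact Hc.
    + eapply gd_derives; eauto.
  - destruct (derives_gd _ _ _ H) as [n Hn].
    destruct (proj2 (sound _ trig HU n) _ _ Hn [] (sc_root _ _ _ NT)) as (w' & we & -> & [k Hk] & (m' & _ & Hm')).
    apply gd_nil_inv in Hm'. subst. rewrite app_nil_r. eapply gd_derives; eauto.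
Qed.
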